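(* Let $n,m\in\mathbb{N}$ with $n\ge3$, $\sigma\in[5/n,1]$ and $\varepsilon\in[0,1/4]$. Let $A$ be a (possibly randomized) algorithm such that for every $n$-arm bandit $q$, $A$ makes $m$ (possibly adaptive) queries to the bandit oracle $\mathcal{O}_q$ and outputs a $\sigma$-smooth strategy $\pi$ that, with probability at least $2/3$, is an $\varepsilon$-optimal $\sigma$-smooth strategy for $q$. Then $m\ge n/6$.
   Context: An $n$-arm bandit is a vector $q=(q_1,\dots,q_n)$ of probability distributions on $[0,1]$; its oracle $\mathcal{O}_q$, on query $i\in[n]$, returns an independent sample from $q_i$. The expected utilities vector is $u$ with $u_i=\mathbb{E}_{x\sim q_i}[x]$. A strategy is a distribution $\pi$ on $[n]$ with expected utility $\pi\cdot u=\sum_i\pi_iu_i$; it is $\sigma$-smooth if $\pi_i\le\sigma$ for all $i$; it is an $\varepsilon$-optimal $\sigma$-smooth strategy for $q$ if it is $\sigma$-smooth and $\pi'\cdot u-\pi\cdot u\le\varepsilon$ for every $\sigma$-smooth strategy $\pi'$. *)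

(* Defs.v *)
From HB Require Import structures.
From mathcomp Require Import all_boot all_order all_algebra.
From mathcomp Require Import all_classical all_reals all_analysis.
Set Implicit Arguments. Unset Strict Implicit. Unset Printing Implicit Defensive.
Import Order.TTheory GRing.Theory Num.Theory.
Local Open Scope ring_scope.
Local Open Scope classical_set_scope.

(* An n-arm bandit: a vector of probability distributions on [0,1]
   (probability measures on the Borel sets of R giving mass 1 to [0,1]). *)
Definition bandit (R : realType) (n : nat) (q : 'I_n -> probability R R) : Prop :=
  forall i, q i `[0%R, 1%R] = 1%E.

Definition utility (R : realType) (n : nat) (q : 'I_n -> probability R R) (i : 'I_n) : R :=
  fine (\int[q i]_x (x%:E))%E.

Definition dotp (R : realType) (n : nat) (a b : 'I_n -> R) : R := \sum_(i < n) a i * b i.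

Definition is_strategy (R : realType) (n : nat) (pi : 'I_n -> R) : Prop :=
  (forall i, 0 <= pi i) /\ \sum_(i < n) pi i = 1.

Definition smooth (R : realType) (n : nat) (sigma : R) (pi : 'I_n -> R) : Prop :=
  is_strategy pi /\ forall i, pi i <= sigma.

Definition eps_opt_smooth (R : realType) (n : nat) (q : 'I_n -> probability R R)
  (sigma eps : R) (pi : 'I_n -> R) : Prop :=
  smooth sigma pi /\
  forall pi', smooth sigma pi' -> dotp pi' (utility q) - dotp pi (utility q) <= eps.

(* Deterministic adaptive query algorithm making k queries: either it has
   no query left and outputs a vector 'I_n -> R, or it queries arm i and
   continues depending on the observed sample x : R. *)
Fixpoint dalg (R : realType) (n k : nat) : Type :=
  match k with
  | 0 => 'I_n -> R
  | k'.+1 => ('I_n * (R -> dalg R n k'))%type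
  end.

Fixpoint all_outputs (R : realType) (n k : nat) (P : ('I_n -> R) -> Prop) :
  dalg R n k -> Prop :=
  match k return dalg R n k -> Prop with
  | 0 => fun d => P d
  | k'.+1 => fun d => forall x : R, all_outputs P (d.2 x)
  end.

(* probability (as an extended real) that the output satisfies P when each
   query to arm i returns an independent sample from q i *)
Fixpoint succ_prob (R : realType) (n : nat) (q : 'I_n -> probability R R)
  (P : ('I_n -> R) -> Prop) (k : nat) : dalg R n k -> \bar R :=
  match k return dalg R n k -> \bar R with
  | 0 => fun d => (if `[< P d >] then 1 else 0)%:E
  | k'.+1 => fun d => (\int[q d.1]_x succ_prob q P (d.2 x))%E
  end.

(* A randomized algorithm: a probability space (Omega, P) of internal
   randomness and, for each random seed, a deterministic adaptive algorithm.
   Probability of the output satisfying Q on bandit q: *)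
Definition rsucc_prob (R : realType) (n m : nat) (d : measure_display)
  (Omega : measurableType d) (P : probability Omega R)
  (A : Omega -> dalg R n m) (q : 'I_n -> probability R R)
  (Q : ('I_n -> R) -> Prop) : \bar R :=
  (\int[P]_w succ_prob q Q (A w))%E.

(* Main.v *)
Require Import Defs.
From HB Require Import structures.
From mathcomp Require Import all_boot all_order all_algebra.
From mathcomp Require Import all_classical all_reals all_analysis.
From mathcomp Require Import measurable_realfun.
From mathcomp Require Import ring lra.
Import Order.TTheory GRing.Theory Num.Theory.
Local Open Scope ring_scope.

Module Helpers.
Set Implicit Arguments. Unset Strict Implicit. Unset Printing Implicit Defensive.
Import HBNNSimple.

Section MeasPart.
Local Open Scope classical_set_scope.
Lemma dirac_le (R : realType) (a : R) (g : R -> \bar R) :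
  (forall x, (0 <= g x)%E) -> (\int[\d_a]_x g x <= g a)%E.
Proof.
move=> g0; rewrite ge0_integralE // patch_setT.
apply: ge_ereal_sup => _ [h hle <-].
have := integral_nnsfun (\d_a) (@measurableT _ R) h.
rewrite patch_setT => <-.
rewrite integral_dirac //; last by apply/measurable_EFinP; exact: measurable_funPT.
rewrite diracE in_setT mul1e; exact: hle.
Qed.

Definition qd (R : realType) (n : nat) (v : 'I_n -> R) : 'I_n -> probability R R :=
  fun i => (\d_(v i) : probability R R).

Fixpoint run (R : realType) (n k : nat) : dalg R n k -> ('I_n -> R) -> 'I_n -> R :=
  match k return dalg R n k -> ('I_n -> R) -> 'I_n -> R with
  | 0 => fun d _ => d
  | k'.+1 => fun d v => run (d.2 (v d.1)) v
  end.

Lemma succ_prob_ge0 (R : realType) (n : nat) (q : 'I_n -> probability R R)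
  (Q : ('I_n -> R) -> Prop) k (D : dalg R n k) : (0 <= succ_prob q Q D)%E.
Proof.
elim: k D => [|k IH] D /=; first by case: ifP; rewrite lee_fin.
by apply: integral_ge0 => x _; exact: IH.
Qed.

Lemma succ_prob_le (R : realType) (n : nat) (v : 'I_n -> R)
  (Q : ('I_n -> R) -> Prop) k (D : dalg R n k) :
  (succ_prob (qd v) Q D <= (if `[< Q (run D v) >] then 1 else 0)%:E)%E.
Proof.
elim: k D => [|k IH] D /=; first by [].
apply: le_trans; first by apply: dirac_le => x; exact: succ_prob_ge0.
exact: IH.
Qed.

Lemma bandit_qd (R : realType) (n : nat) (v : 'I_n -> R) :
  (forall i, 0 <= v i <= 1) -> bandit (qd v).
Proof.
move=> h i; rewrite /qd /= diracE; case: (h i) => /andP[h0 h1].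
by rewrite mem_set //= in_itv /= h0 h1.
Qed.

Lemma utility_qd (R : realType) (n : nat) (v : 'I_n -> R) i :
  utility (qd v) i = v i.
Proof.
rewrite /utility /qd /= integral_dirac //=.
by rewrite indicE in_setT mul1r.
Qed.

Lemma outer_bound (R : realType) d (Omega : measurableType d) (P : probability Omega R)
  (I : finType) (J : pred I) (s : I -> Omega -> \bar R) (K c : R) :
  (forall i w, (0 <= s i w)%E) ->
  (forall w, (\sum_(i | J i) s i w <= K%:E)%E) ->
  (forall i, J i -> (c%:E <= \int[P]_w s i w)%E) ->
  \sum_(i | J i) c <= K.
Proof.
move=> s0 sK sc; rewrite leNgt; apply/negP => Kc.
pose N : R := \sum_(i | J i) 1.
have N0 : 0 <= N by rewrite /N sumr_ge0.
have SN : \sum_(i | J i) c = N * c by rewrite /N mulr_suml; apply: eq_bigr => i _; rewrite mul1r.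
rewrite SN in Kc.
pose del := (N * c - K) / (N + 1).
have del0 : 0 < del by rewrite /del divr_gt0 // ?subr_gt0 // ltr_wpDl.
have : forall i, exists h : {nnsfun Omega >-> R}, J i ->
    (forall x, ((h x)%:E <= s i x)%E) /\ ((c - del)%:E < sintegral P h)%E.
  move=> i; case Ji: (J i); last by exists nnsfun0.
  have := sc i Ji; rewrite ge0_integralE // patch_setT => ci.
  have : ((c - del)%:E < ereal_sup [set sintegral P h | h in
     [set h : {nnsfun Omega >-> R} | forall x, ((h x)%:E <= s i x)%E]])%E.
    by apply: lt_le_trans ci; rewrite lte_fin ltrBlDr ltrDl.
  by move=> /ereal_sup_gt [_ [h hs <-] lt]; exists h.
move=> /choice [h hP].
have hint i : (\int[P]_x (h i x)%:E = sintegral P (h i))%E.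
  by rewrite integral_nnsfun // patch_setT.
have : (\sum_(i | J i) \int[P]_x (h i x)%:E <= K%:E)%E.
  rewrite -big_filter -ge0_integral_sum //; last first.
    by move=> i x _; rewrite lee_fin.
    by move=> i; apply/measurable_EFinP; exact: measurable_funPT.
  apply: (@le_trans _ _ (\int[P]_x (cst K%:E x))%E).
    apply: ge0_le_integral => //.
    - by move=> x _; apply: sume_ge0 => i _; rewrite lee_fin.
    - apply: emeasurable_sum => i; apply/measurable_EFinP; exact: measurable_funPT.
    - move=> x _ /=; rewrite big_filter; apply: le_trans (sK x); apply: lee_sum => i Ji; exact: (hP i Ji).1.
  rewrite integral_cst // (_ : _ [set: Omega] = 1%E) ?mule1 //; exact: probability_setT.
have : ((N * (c - del))%:E <= \sum_(i | J i) \int[P]_x (h i x)%:E)%E.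
  under eq_bigr do rewrite hint.
  rewrite /N mulr_suml -sumEFin; apply: lee_sum => i Ji; rewrite mul1r.
  exact/ltW/(hP i Ji).2.
move=> /le_trans H /H; rewrite lee_fin => H2.
have : N * (c - del) > K.
  have E : N * (c - del) - K = (N * c - K) / (N + 1).
    rewrite /del; field; rewrite addr_eq0; apply/negP => /eqP HN.
    by move: N0; rewrite HN; lra.
  by rewrite -subr_gt0 E divr_gt0 // ?subr_gt0 // ltr_wpDl.
by rewrite ltNge H2.
Qed.

End MeasPart.

Module Cnt.
Local Open Scope nat_scope.
Import ssrnat fintype finset binomial.
Lemma split1 (T : finType) (G Q F : {set T}) i : i \notin Q -> F \subset Q ->
  (G :&: (i |: Q) == i |: F) = (G :&: Q == F) && (i \in G).
Proof.
move=> iQ FQ; have iF : i \notin F by apply: contra iQ; apply: (fintype.subsetP FQ).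
apply/eqP/andP => [H|[/eqP H iG]].
  have iG : i \in G by move/finset.setP/(_ i): H; rewrite !inE eqxx /= => /andP[].
  split=> //; apply/eqP/finset.setP => x; move/finset.setP/(_ x): H; rewrite !inE.
  case: (eqVneq x i) => [->|] //=; first by rewrite (negbTE iQ) (negbTE iF) andbF.
apply/finset.setP => x; move/finset.setP/(_ x): H; rewrite !inE.
case: (eqVneq x i) => [->|] //=; by rewrite iG.
Qed.

Lemma split0 (T : finType) (G Q F : {set T}) i : i \notin Q -> F \subset Q ->
  (G :&: (i |: Q) == F) = (G :&: Q == F) && (i \notin G).
Proof.
move=> iQ FQ; have iF : i \notin F by apply: contra iQ; apply: (fintype.subsetP FQ).
apply/eqP/andP => [H|[/eqP H iG]].
  have iG : i \notin G.
    by apply/negP => iG; move/finset.setP/(_ i): H; rewrite !inE eqxx iG (negbTE iF).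

  split=> //; apply/eqP/finset.setP => x; move/finset.setP/(_ x): H; rewrite !inE.
  case: (eqVneq x i) => [->|] //=; by rewrite (negbTE iQ) (negbTE iF) (negbTE iG).
apply/finset.setP => x; move/finset.setP/(_ x): H; rewrite !inE.
case: (eqVneq x i) => [->|] //=; by rewrite (negbTE iG) (negbTE iF).
Qed.
Section Count.
Variables (n t : nat).
Definition cnt (Q F : {set 'I_n}) :=
  #|[set G : {set 'I_n} | (#|G| == t) && (G :&: Q == F)]|.

Lemma cnt_bin (Q F : {set 'I_n}) : F \subset Q -> #|F| <= t ->
  cnt Q F = 'C(n - #|Q|, t - #|F|).
Proof.
move=> FQ ft; rewrite /cnt.
have -> : [set G : {set 'I_n} | (#|G| == t) && (G :&: Q == F)] =
  [set B :|: F | B in [set A : {set 'I_n} | A \subset ~: Q & #|A| == t - #|F|]].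
  apply/finset.setP => G; rewrite inE; apply/idP/imsetP.
    move=> /andP[/eqP Gt /eqP GQ]; exists (G :\: Q).
      by rewrite inE finset.subDset finset.setUCr finset.subsetT /= cardsD GQ Gt.
    by rewrite -GQ finset.setUC finset.setID.
  move=> [B]; rewrite inE => /andP[BQ /eqP Bc] ->.
  have BQ0 : B :&: Q = finset.set0.
    by apply/finset.setP => x; rewrite !inE; apply/negP => /andP[xB xQ];
      move: (fintype.subsetP BQ x xB); rewrite inE xQ.
  apply/andP; split.
    rewrite cardsU Bc.
    have -> : B :&: F = finset.set0.
      by apply/eqP; rewrite -finset.subset0 -BQ0 finset.setIS.
    by rewrite cards0 subn0 subnK.
  by rewrite finset.setIUl BQ0 finset.set0U (finset.setIidPl FQ).
rewrite card_in_imset; last first.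
  move=> B1 B2; rewrite !inE => /andP[B1Q _] /andP[B2Q _] E.
  have: (B1 :|: F) :&: ~: Q = (B2 :|: F) :&: ~: Q by rewrite E.
  rewrite !finset.setIUl (finset.setIidPl B1Q) (finset.setIidPl B2Q).
  have -> : F :&: ~: Q = finset.set0.
    by apply/eqP; rewrite finset.setI_eq0 finset.disjoints_subset finset.setCK.
  by rewrite !finset.setU0.
rewrite cards_draws; congr 'C(_, _).
by rewrite cardsCs finset.setCK card_ord.
Qed.

Lemma cnt_split (Q F : {set 'I_n}) i : i \notin Q -> F \subset Q ->
  cnt Q F = cnt (i |: Q) (i |: F) + cnt (i |: Q) F.
Proof.
move=> iQ FQ; rewrite /cnt -(cardsID [set G : {set 'I_n} | i \in G]).
congr (_ + _); apply: eq_card => G; rewrite !inE.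
  by rewrite split1 // -andbA.
by rewrite split0 //; case: (i \in G); rewrite /= ?andbT ?andbF.
Qed.

Lemma cnt0 (Q F : {set 'I_n}) : t < #|F| -> cnt Q F = 0.
Proof.
move=> tF; rewrite /cnt; apply: eq_card0 => G; rewrite inE.
apply/negP => /andP[/eqP Gt /eqP GQ].
have : #|F| <= #|G| by rewrite -GQ subset_leq_card // finset.subsetIl.
by rewrite Gt leqNgt tF.
Qed.

Lemma cnt_ratio (Q F : {set 'I_n}) i : i \notin Q -> F \subset Q ->
  cnt (i |: Q) (i |: F) * (n - #|Q|) = cnt Q F * (t - #|F|).
Proof.
move=> iQ FQ; have iF : i \notin F by apply: contra iQ; apply: (fintype.subsetP FQ).
have [ft|tf] := ltnP #|F| t; last first.
  rewrite cnt0 ?mul0n; last by rewrite cardsU1 iF.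
  by rewrite (_ : t - #|F| = 0) ?muln0 //; apply/eqP; rewrite subn_eq0.
rewrite !cnt_bin //; try exact: ltnW; try (by apply: finset.setUS);
  try (by rewrite cardsU1 iF).
rewrite !cardsU1 (negbTE iQ) (negbTE iF) /= !add1n.
have := mul_bin_diag (n - #|Q|) (t - #|F|).-1.
rewrite prednK ?subn_gt0 // => E.
by rewrite mulnC [RHS]mulnC -E !subnS.
Qed.
End Count.
End Cnt.
Import Cnt.
Lemma step_arith (R : realFieldType) (c c1 c0 s f t M k : R) :
  0 <= s -> 0 <= c1 -> 0 <= c0 -> c = c1 + c0 -> c1 * M = c * (t - f) ->
  0 <= t - f -> 0 < M - 1 - k -> 0 <= k ->
  c1 * (s * (f + 1) + (s * k + 1) * (t - (f + 1)) / (M - 1 - k)) +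
  c0 * (s * f + (s * k + 1) * (t - f) / (M - 1 - k)) <=
  c * (s * f + (s * (k + 1) + 1) * (t - f) / (M - 1 - k)).
Proof.
move=> s0 c10 c00 cE c1M tf E0 k0.
rewrite -subr_ge0.
have -> : c * (s * f + (s * (k + 1) + 1) * (t - f) / (M - 1 - k)) -
  (c1 * (s * (f + 1) + (s * k + 1) * (t - (f + 1)) / (M - 1 - k)) +
   c0 * (s * f + (s * k + 1) * (t - f) / (M - 1 - k))) =
  (s * (c1 * M - c1 * (M - 1 - k)) + (s * k + 1) * c1) / (M - 1 - k).
  rewrite c1M cE; field; lra.
apply: divr_ge0; last lra.
apply: addr_ge0; last by apply: mulr_ge0 => //; apply: addr_ge0 => //; apply: mulr_ge0.
apply: mulr_ge0 => //; rewrite -mulrBr; apply: mulr_ge0 => //; lra.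
Qed.

Lemma mono_arith (R : realFieldType) (s f t M k : R) :
  0 <= s -> 0 <= t - f -> 0 < M - (k + 1) -> 0 <= k ->
  s * f + (s * k + 1) * (t - f) / (M - k) <=
  s * f + (s * (k + 1) + 1) * (t - f) / (M - (k + 1)).
Proof.
move=> s0 tf E0 k0; rewrite lerD2l.
rewrite ler_pdivrMr; last lra.
rewrite mulrAC ler_pdivlMr; last lra.
rewrite [X in X <= _]mulrAC [X in _ <= X]mulrAC; apply: ler_wpM2r => //.
have h1 : 0 <= s * k by apply: mulr_ge0.
nra.
Qed.

Section Core.
Variables (R : realType) (n t : nat) (sig : R).
Hypothesis sig0 : 0 <= sig.
Definition vv (G : {set 'I_n}) : 'I_n -> R := fun i => (i \in G)%:R.
Definition valp (p : 'I_n -> R) (G : {set 'I_n}) := \sum_(i in G) p i.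
Definition Phi (q f k : nat) : R :=
  sig * f%:R + (sig * k%:R + 1) * (t%:R - f%:R) / (n%:R - q%:R - k%:R).

Lemma cntE (Q F : {set 'I_n}) :
  (cnt t Q F)%:R = \sum_(G : {set 'I_n} | (#|G| == t) && (G :&: Q == F)) (1 : R).
Proof.
rewrite /cnt -sum1_card natr_sum; apply: eq_bigl => G; by rewrite inE.
Qed.

Definition Sp (Q F G : {set 'I_n}) : bool := (#|G| == t) && (G :&: Q == F).

Lemma cntE' (Q F : {set 'I_n}) :
  (cnt t Q F)%:R = \sum_(G | Sp Q F G) (1 : R).
Proof. exact: cntE. Qed.

Lemma count_in (Q F : {set 'I_n}) i : i \in Q ->
  \sum_(G | Sp Q F G) ((i \in G)%:R : R) = (i \in F)%:R * (cnt t Q F)%:R.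
Proof.
move=> iQ; rewrite cntE' mulr_sumr; apply: eq_bigr => G /andP[_ /eqP GQ].
by rewrite mulr1 -GQ inE iQ andbT.
Qed.

Lemma count_out (Q F : {set 'I_n}) i : i \notin Q -> F \subset Q ->
  \sum_(G | Sp Q F G) ((i \in G)%:R : R) = (cnt t (i |: Q) (i |: F))%:R.
Proof.
move=> iQ FQ; rewrite cntE' (bigID (fun G : {set 'I_n} => i \in G)) /=.
rewrite [X in _ + X]big1 ?addr0; last by move=> G /andP[_ /negbTE ->].
rewrite (eq_bigr (fun _ => 1)); last by move=> G /andP[_ ->].
by apply: eq_bigl => G; rewrite /Sp split1 // andbA.
Qed.

Lemma valpE (p : 'I_n -> R) G : valp p G = \sum_i (i \in G)%:R * p i.
Proof.
rewrite /valp big_mkcond; apply: eq_bigr => i _.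
by case: (i \in G); rewrite ?mul1r ?mul0r.
Qed.

Lemma leaf (p : 'I_n -> R) (Q F : {set 'I_n}) : smooth sig p -> F \subset Q ->
  (#|F| <= t)%N -> (#|Q| < n)%N ->
  \sum_(G | Sp Q F G) valp p G <= (cnt t Q F)%:R * Phi #|Q| #|F| 0.
Proof.
move=> [[p0 p1] ps] FQ ft Qn.
under eq_bigr do rewrite valpE.
rewrite exchange_big /=.
under eq_bigr do rewrite -mulr_suml.
set c := (cnt t Q F)%:R.
set K := c * (t%:R - #|F|%:R) / (n%:R - #|Q|%:R).
have nq0 : 0 < n%:R - #|Q|%:R :> R by rewrite subr_gt0 ltr_nat.
have tf0 : 0 <= t%:R - #|F|%:R :> R by rewrite subr_ge0 ler_nat.
have c0 : 0 <= c by rewrite ler0n.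
have K0 : 0 <= K by rewrite /K; apply: divr_ge0; [apply: mulr_ge0|apply: ltW].
apply: (@le_trans _ _ (\sum_i (sig * c * (i \in F)%:R + K * p i))).
  apply: ler_sum => i _.
  case iQ: (i \in Q).
    rewrite count_in // -/c; case iF: (i \in F); rewrite ?mul1r ?mul0r ?mulr0 ?add0r.
      by rewrite mulr1 mulrC -[X in X <= _]addr0 lerD ?ler_wpM2r // mulr_ge0.
    by rewrite mulr_ge0.
  rewrite count_out ?iQ //.
  have := cnt_ratio t (negbT iQ) FQ.
  move=> /(congr1 (fun x => x%:R : R)); rewrite !natrM natrB ?(ltnW Qn) // natrB // => E.
  have -> : (cnt t (i |: Q) (i |: F))%:R = K.
    rewrite /K -E -/c mulrK // unitfE; exact: lt0r_neq0.
  by rewrite mulrC lerDr mulr_ge0 // mulr_ge0.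
rewrite big_split /= -mulr_sumr -mulr_sumr p1 mulr1.
have -> : \sum_(i < n) ((i \in F)%:R : R) = #|F|%:R.
  rewrite -sum1_card natr_sum [RHS]big_mkcond /=; apply: eq_bigr => i _.
  by case: (i \in F).
rewrite [X in _ <= X](_ : _ = sig * c * #|F|%:R + K) //.
rewrite /Phi /K mulr0 add0r mul1r subr0; field.
by apply: lt0r_neq0.
Qed.

Lemma empty_case (p : {set 'I_n} -> R) (Q F : {set 'I_n}) (k : nat) : (t < #|F|)%N ->
  \sum_(G | Sp Q F G) p G <= (cnt t Q F)%:R * Phi #|Q| #|F| k.
Proof.
move=> tF; rewrite cnt0 // mul0r big_pred0 // => G; apply/negP => /andP[/eqP Gt /eqP GQ].
have : (#|F| <= #|G|)%N by rewrite -GQ subset_leq_card // finset.subsetIl.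
by rewrite Gt leqNgt tF.
Qed.

Lemma PhiS (q f k : nat) : Phi q f k.+1 =
  sig * f%:R + (sig * (k%:R + 1) + 1) * (t%:R - f%:R) / (n%:R - q%:R - (k%:R + 1)).
Proof. by rewrite /Phi -natr1. Qed.

Lemma PhiS' (q f k : nat) : Phi q f k.+1 =
  sig * f%:R + (sig * (k%:R + 1) + 1) * (t%:R - f%:R) / ((n%:R - q%:R) - 1 - k%:R).
Proof. by rewrite /Phi -natr1; congr (_ + _ * _ / _); lra. Qed.

Lemma Phi1 (q f k : nat) : Phi q.+1 f.+1 k =
  sig * (f%:R + 1) + (sig * k%:R + 1) * (t%:R - (f%:R + 1)) / ((n%:R - q%:R) - 1 - k%:R).
Proof. by rewrite /Phi -!natr1; congr (_ + _ * _ / _); lra. Qed.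

Lemma Phi0 (q f k : nat) : Phi q.+1 f k =
  sig * f%:R + (sig * k%:R + 1) * (t%:R - f%:R) / ((n%:R - q%:R) - 1 - k%:R).
Proof. by rewrite /Phi -!natr1; congr (_ + _ * _ / _); lra. Qed.

Lemma Phik (q f k : nat) : Phi q f k =
  sig * f%:R + (sig * k%:R + 1) * (t%:R - f%:R) / ((n%:R - q%:R) - k%:R).
Proof. by []. Qed.

Lemma core k : forall (D : dalg R n k) (Q F : {set 'I_n}),
  all_outputs (smooth sig) D -> F \subset Q -> (#|Q| + k < n)%N ->
  \sum_(G | Sp Q F G) valp (run D (vv G)) G <= (cnt t Q F)%:R * Phi #|Q| #|F| k.
Proof.
elim: k => [|k IH] D Q F hD FQ Qk.
  have [tF|ft] := ltnP t #|F|; first exact: empty_case.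
  by apply: leaf => //; rewrite addn0 in Qk.
have [tF|ft] := ltnP t #|F|; first exact: empty_case.
case: D hD => i g /= hD.
have c0 : 0 <= (cnt t Q F)%:R :> R by rewrite ler0n.
have tf0 : 0 <= t%:R - #|F|%:R :> R by rewrite subr_ge0 ler_nat.
case iQ: (i \in Q).
  pose b : R := (i \in F)%:R.
  rewrite (eq_bigr (fun G => valp (run (g b) (vv G)) G)); last first.
    by move=> G /andP[_ /eqP GQ]; rewrite /vv /b -GQ inE iQ andbT.
  apply: le_trans; first by apply: IH => //; apply: leq_trans Qk; rewrite addnS.
  apply: ler_wpM2l => //; rewrite PhiS Phik; apply: mono_arith => //.
    by move: Qk; rewrite -(ltr_nat R) natrD -natr1 => H; lra.
have iF : i \notin F by apply/negP => /(fintype.subsetP FQ); rewrite iQ.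
rewrite (bigID (fun G : {set 'I_n} => i \in G)) /=.
rewrite (eq_bigr (fun G => valp (run (g 1) (vv G)) G)); last first.
  by move=> G /andP[_ iG]; rewrite /vv iG.
rewrite [X in _ + X <= _](eq_bigr (fun G => valp (run (g 0) (vv G)) G)); last first.
  by move=> G /andP[_ /negbTE iG]; rewrite /vv iG.
rewrite (eq_bigl (Sp (i |: Q) (i |: F))); last first.
  by move=> G; rewrite /Sp split1 ?iQ // andbA.
rewrite [X in _ + X <= _](eq_bigl (Sp (i |: Q) F)); last first.
  by move=> G; rewrite /Sp split0 ?iQ // andbA.
have sz : (#|i |: Q| + k < n)%N by rewrite cardsU1 iQ add1n addSn -addnS.
apply: le_trans.
  apply: lerD; apply: IH => //.
  - by apply: finset.setUS.
  - by apply: (fintype.subset_trans FQ); apply: finset.subsetUr.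
have E1 := cnt_split t (negbT iQ) FQ.
have E2 := cnt_ratio t (negbT iQ) FQ.
have Qn : (#|Q| <= n)%N by apply: leq_trans (ltnW Qk); rewrite leq_addr.
move: E1 E2; rewrite !cardsU1 iQ (negbTE iF) !add1n /=.
move=> /(congr1 (fun x => x%:R : R)) E1 /(congr1 (fun x => x%:R : R)) E2.
rewrite natrD in E1; rewrite !natrM !natrB // in E2.
rewrite Phi1 Phi0 PhiS'.
apply: step_arith => //. all: try by rewrite ler0n.
by move: Qk; rewrite -(ltr_nat R) natrD -natr1 => H; lra.
Qed.

End Core.

Lemma lemA3 (R : realFieldType) (s T N M : R) :
  3 <= T -> 0 < s -> T * s <= 1 -> 1 < (T + 1) * s -> 5 <= N * s ->
  6 * M + 1 <= N -> 0 <= M ->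
  (s * M + 1) * T < 2/3 * (T * s - 1/4) * (N - M).
Proof.
move=> T3 s0 Ts1 Ts2 Ns M6 M0.
set x := T * s.
have x34 : 3/4 < x.
  have : 3 * (T + 1) * s <= 4 * x by rewrite /x; nra.
  nra.
have xN : 5 * T <= x * N by rewrite /x; nra.
have : (s * M + 1) * T = x * M + T by rewrite /x; ring.
move=> ->.
nra.
Qed.

Lemma lemT1 (R : realFieldType) (s N M : R) :
  0 < s -> s <= 1 -> 1 < 2 * s -> 5 <= N * s -> 6 * M + 1 <= N ->
  (M = 0 \/ M = 1 \/ M = 2 \/ M = 3 \/ 4 <= M) ->
  2/3 * (s - 1/4) * (N - M) <= (s * M + 1) ->
  (s * M + 1) * 2 < (N - M) / 2.
Proof.
move=> s0 s1 s2 Ns MN [HM|[HM|[HM|[HM|M4]]]] nA; try subst M.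
- nra.
- have h : 0 <= (s - 1/4) * (N - 7) by apply: mulr_ge0; lra.
  nra.
- have h : 0 <= (s - 1/4) * (N - 13) by apply: mulr_ge0; lra.
  nra.
- have h : 0 <= (s - 1/4) * (N - 19) by apply: mulr_ge0; lra.
  nra.
- have h : 0 <= (1 - s) * M by apply: mulr_ge0; lra.
  nra.
Qed.

Lemma lemT2 (R : realFieldType) (s N M : R) :
  0 < s -> 2 * s <= 1 -> 1 < 3 * s -> 5 <= N * s -> 6 * M + 1 <= N ->
  (M = 0 \/ M = 1 \/ M = 2 \/ 3 <= M) ->
  2/3 * (2 * s - 1/4) * (N - M) <= (s * M + 1) * 2 ->
  (s * M + 1) * 3 < (N - M) / 2.
Proof.
move=> s0 s1 s2 Ns MN [HM|[HM|[HM|M4]]] nA; try subst M.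
- nra.
- nra.
- have h : 0 <= (2 * s - 1/4) * (N - 13) by apply: mulr_ge0; lra.
  nra.
- have h : 0 <= (1 - 2 * s) * M by apply: mulr_ge0; lra.
  nra.
Qed.

Lemma mcases (R : realFieldType) (m : nat) :
  [/\ m%:R = 0 :> R \/ m%:R = 1 :> R \/ m%:R = 2 :> R \/ m%:R = 3 :> R \/ 4 <= m%:R :> R,
      m%:R = 0 :> R \/ m%:R = 1 :> R \/ m%:R = 2 :> R \/ 3 <= m%:R :> R & 0 <= m%:R :> R].
Proof.
split; last by rewrite ler0n.
- case: m => [|[|[|[|m]]]]; [left|right;left|right;right;left|right;right;right;left|];
    rewrite ?mulr0n ?mulr1n //.
  by do 4 right; rewrite (ler_nat R 4).
- case: m => [|[|[|m]]]; [left|right;left|right;right;left|];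
    rewrite ?mulr0n ?mulr1n //.
  by do 3 right; rewrite (ler_nat R 3).
Qed.

Lemma choose_t (R : realType) (s : R) (n m : nat) :
  0 < s -> s <= 1 -> 5 <= n%:R * s -> (6 * m < n)%N ->
  exists t : nat, [/\ (0 < t)%N, (t < n)%N &
    (s * m%:R + 1) * t%:R / (n%:R - m%:R) < 2/3 * (Num.min 1 (t%:R * s) - 1/4)].
Proof.
move=> s0 s1 Ns mn.
set T := Num.truncn (s^-1).
have si0 : 0 <= s^-1 by rewrite invr_ge0 ltW.
have /andP[T1 T2] := truncn_itv si0; rewrite -/T in T1 T2.
have Ts1 : T%:R * s <= 1.
  by have := ler_wpM2r (ltW s0) T1; rewrite mulVf // lt0r_neq0.
have Ts2 : 1 < (T%:R + 1) * s.
  by have := ltr_pM2r s0 (s^-1) (T%:R + 1); rewrite mulVf ?lt0r_neq0 // natr1 T2 => /esym. 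
have Tpos : (0 < T)%N by rewrite truncn_gt0 invr_ge1 ?unitfE ?lt0r_neq0.
set N := n%:R : R; set M := m%:R : R.
have MN : 6 * M + 1 <= N.
  by have H : ((6 * m).+1 <= n)%N := mn; move: H; rewrite -(ler_nat R) -natr1 natrM.
have [C1 C2 M0] := mcases R m; rewrite -/M in C1 C2 M0.
have D0 : 0 < N - M by lra.
have N5 : 5 <= N by nra.
have TN : T%:R * 5 <= N.
  have : T%:R * (N * s) <= N by rewrite mulrCA; apply: ler_piMr; rewrite /N ?ler0n.
  have : T%:R * 5 <= T%:R * (N * s) by apply: ler_wpM2l; rewrite ?ler0n.
  lra.
have T1r : 1 <= T%:R :> R by rewrite (ler_nat R 1).
case: (ltrP ((s * M + 1) * T%:R) (2/3 * (T%:R * s - 1/4) * (N - M))) => [A|nA].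
  exists T; split => //.
    by rewrite -(ltr_nat R); lra.
  rewrite (_ : Num.min 1 _ = T%:R * s); last by rewrite minElt ltNge Ts1.
  by rewrite ltr_pdivrMr // mulrA.
exists T.+1; split => //.
  rewrite -(ltr_nat R) -natr1 -/N; lra.
rewrite (_ : Num.min 1 _ = 1); last by rewrite minEle -natr1 ltW.
rewrite ltr_pdivrMr // -natr1.
suff : (s * M + 1) * (T%:R + 1) < (N - M) / 2 by lra.
have [T3|] := leqP 3 T.
  exfalso; move: nA; rewrite leNgt => /negP; apply; apply: lemA3 => //.
  by rewrite (ler_nat R 3).
case: T Tpos T1 T2 Ts1 Ts2 TN T1r nA => [|[|[|T]]] // _ _ _ Ts1 Ts2 _ _ nA _.
- rewrite mulr1n in Ts1 Ts2 nA *.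
  apply: lemT1 => //; lra.
- idtac.
  rewrite (_ : 2 + 1 = 3 :> R); last by lra.
  apply: lemT2 => //; lra.
Qed.

Lemma run_out (R : realType) (n k : nat) (P : ('I_n -> R) -> Prop) (D : dalg R n k) v :
  all_outputs P D -> P (run D v).
Proof. by elim: k D => [|k IH] D //= h; apply: IH. Qed.

Lemma sum_wit (R : realType) (n : nat) (G : {set 'I_n}) (a b : R) :
  \sum_i (if i \in G then a else b) = #|G|%:R * a + (n - #|G|)%:R * b.
Proof.
rewrite (bigID (fun i : 'I_n => i \in G)) /=.
rewrite (eq_bigr (fun _ => a)); last by move=> i ->.
rewrite [X in _ + X](eq_bigr (fun _ => b)); last by move=> i /negbTE ->.
rewrite !sumr_const -[a *+ _]mulr_natl -[b *+ _]mulr_natl.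
congr (_ * _ + _ * _); congr (_%:R).
have := cardC G; rewrite card_ord => E.
have -> : #|(fun i : 'I_n => i \notin G)| = #|[predC G]| by apply: eq_card.
by rewrite -(addKn #|G| #|[predC G]|) E.
Qed.

End Helpers.
Import Helpers.

Theorem mainTheorem9 (R : realType) (n m : nat) (sigma eps : R)
  (d : measure_display) (Omega : measurableType d) (P : probability Omega R)
  (A : Omega -> dalg R n m) :
  (3 <= n)%N ->
  5 / n%:R <= sigma -> sigma <= 1 ->
  0 <= eps -> eps <= 1 / 4 ->
  (forall w, all_outputs (smooth sigma) (A w)) ->
  (forall q : 'I_n -> probability R R, bandit q ->
     (((2 / 3 : R))%:E <= rsucc_prob P A q (eps_opt_smooth q sigma eps))%E) ->
  n%:R / 6 <= m%:R :> R.
Proof.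
move=> n3 sn s1 e0 e1 hA hs.
rewrite leNgt; apply/negP => hm.
have n0 : 0 < n%:R :> R by rewrite ltr0n; case: n n3 {A hA hs hm sn}.
have sp : 0 < sigma by apply: lt_le_trans sn; rewrite divr_gt0.
have Ns : 5 <= n%:R * sigma by rewrite mulrC -ler_pdivrMr.
have mn : (6 * m < n)%N by rewrite -(ltr_nat R) natrM; move: hm; lra.
have [t [t0 tn Ht]] := choose_t sp s1 Ns mn.
set V := Num.min 1 (t%:R * sigma) in Ht.
set Phi0 := (sigma * m%:R + 1) * t%:R / (n%:R - m%:R) in Ht.
have mnR : m%:R < n%:R :> R by lra.
have Phi0_ge0 : 0 <= Phi0.
  rewrite /Phi0; apply: divr_ge0; last by lra.
  by apply: mulr_ge0; rewrite ?ler0n //; apply: addr_ge0 => //; apply: mulr_ge0; rewrite ?ler0n ?ltW.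
have V14 : 1/4 < V by lra.
have Vcase : V = 1 \/ V = t%:R * sigma by rewrite /V minEle; case: ifP; [left|right].
have V1 : V <= 1 by rewrite /V ge_min lexx.
have Vts : V <= t%:R * sigma by rewrite /V ge_min lexx orbT.
set th := V - eps.
have th0 : 0 < th by rewrite /th; lra.
have tnR : t%:R < n%:R :> R by rewrite ltr_nat.
have t0R : 0 < t%:R :> R by rewrite ltr0n.
pose al := V / t%:R; pose be := (1 - V) / (n%:R - t%:R).
pose wit (G : {set 'I_n}) := fun i : 'I_n => if i \in G then al else be.
have wit_sm (G : {set 'I_n}) : #|G| = t -> smooth sigma (wit G).
  move=> Gt; split; [split|].
  - move=> i; rewrite /wit; case: ifP => _; [apply: divr_ge0; lra| apply: divr_ge0; lra].
  - rewrite sum_wit Gt natrB ?(ltnW tn) // /al /be; field; lra.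
  - move=> i; rewrite /wit; case: ifP => _.
      by rewrite /al ler_pdivrMr // mulrC.
    rewrite /be ler_pdivrMr; last lra.
    case: Vcase => ->; first by rewrite subrr mulr_ge0 ?ltW // subr_gt0.
    by rewrite mulrBr; nra.
have dot_val (G : {set 'I_n}) (p : 'I_n -> R) : dotp p (utility (qd (vv R G))) = valp p G.
  rewrite /dotp valpE; apply: eq_bigr => i _; by rewrite utility_qd /vv mulrC.
have dot_wit (G : {set 'I_n}) : #|G| = t -> dotp (wit G) (utility (qd (vv R G))) = V.
  move=> Gt; rewrite dot_val /valp.
  rewrite (eq_bigr (fun _ => al)); last by move=> i iG; rewrite /wit iG.
  by rewrite sumr_const -[al *+ _]mulr_natl Gt /al mulrC divfK // lt0r_neq0.
have succ_val (G : {set 'I_n}) (p : 'I_n -> R) : #|G| = t -> eps_opt_smooth (qd (vv R G)) sigma eps p -> th <= valp p G.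
  move=> Gt [_ H]; have := H (wit G) (wit_sm G Gt); rewrite dot_wit // dot_val /th; lra.
set C := (Cnt.cnt t (finset.set0 : {set 'I_n}) finset.set0)%:R : R.
have pw w : \sum_(G | Sp t finset.set0 finset.set0 G)
   (if `[< eps_opt_smooth (qd (vv R G)) sigma eps (run (A w) (vv R G)) >] then 1 else 0)
   <= C * Phi0 / th.
  rewrite ler_pdivlMr // mulr_suml.
  apply: (@le_trans _ _ (\sum_(G | Sp t finset.set0 finset.set0 G) valp (run (A w) (vv R G)) G)).
    apply: ler_sum => G /andP[/eqP Gt _].
    case: asboolP => h; first by rewrite mul1r; exact: succ_val.
    rewrite mul0r /valp; apply: sumr_ge0 => i _.
    by have [[p0 _] _] := run_out (vv R G) (hA w); apply: p0.
  have mn' : (#|(finset.set0 : {set 'I_n})| + m < n)%N.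
    by rewrite cards0 add0n; apply: leq_ltn_trans mn; rewrite leq_pmull.
  have := @core R n t sigma (ltW sp) m (A w) finset.set0 finset.set0 (hA w) (finset.sub0set _) mn'.
  rewrite cards0 (_ : Phi n t sigma 0 0 m = Phi0) //.
  by rewrite /Phi /Phi0 mulr0 add0r !subr0.
have := @outer_bound R d Omega P _ (Sp t finset.set0 finset.set0)
  (fun G w => succ_prob (qd (vv R G)) (eps_opt_smooth (qd (vv R G)) sigma eps) (A w))
  (C * Phi0 / th) (2/3).
have C0 : 0 < C.
  rewrite /C Cnt.cnt_bin ?finset.sub0set ?cards0 ?subn0 ?ltr0n ?bin_gt0 ?(ltnW tn) //.
move=> /(_ _ _ _) H.
have H1 : 2/3 * C <= C * Phi0 / th.
  have E : C = \sum_(G | Sp t (finset.set0 : {set 'I_n}) finset.set0 G) (1 : R) by rewrite /C; apply: (cntE' R).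
  rewrite {1}E mulr_sumr; under eq_bigr do rewrite mulr1.
  apply: H.
  - by move=> G w; exact: succ_prob_ge0.
  - move=> w; apply: le_trans; first by apply: lee_sum => G _; exact: succ_prob_le.
    by rewrite sumEFin lee_fin; exact: pw.
  - move=> G _; apply: hs; apply: bandit_qd => i; rewrite /vv.
    by case: (i \in G); rewrite /= ?lexx ?ler01.
move: H1; rewrite ler_pdivlMr // => H1.
have H2 : C * (2/3 * th) <= C * Phi0 by rewrite mulrCA mulrA.
rewrite ler_pM2l // in H2.
move: H2 Ht; rewrite /th; lra.
Qed.
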